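(* Let $A\in\mathbb{Z}^{m\times n}$ have full column rank, let $x^*\in\mathbb{R}^n$, let $y^*\in S(A,x^* )$, let $k:=\dim S(A,y^* )$, and fix $d\in\{1,\dots,k\}$. Then there exists a $d$-dimensional face of $S(A,y^* )$ containing $y^*$ that intersects some $(k-d)$-dimensional face of $S(A,y^* )$ containing $0$.
   Context: With rows $a_1^\top,\dots,a_m^\top$ of $A$, for $x^*\in\mathbb{R}^n$ define the cone $C(A,x^* )=\{x\in\mathbb{R}^n: \operatorname{sign}(a_i^\top x^* )\,a_i^\top x\ge 0 \text{ for all } i \text{ with } a_i^\top x^*\neq 0;\ a_i^\top x=0 \text{ for all } i \text{ with } a_i^\top x^*=0\}$ and the polytope (spindle) $S(A,x^* )=C(A,x^* )\cap(x^*-C(A,x^* ))$. *)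

(* Defs.v *)
From HB Require Import structures.
From mathcomp Require Import all_boot all_order all_algebra.
From mathcomp Require Import reals.
Set Implicit Arguments. Unset Strict Implicit. Unset Printing Implicit Defensive.
Import Order.TTheory GRing.Theory Num.Theory.
Local Open Scope ring_scope.

Definition intmxR (R : realType) (m n : nat) (A : 'M[int]_(m, n)) : 'M[R]_(m, n) :=
  map_mx (fun z : int => z%:~R) A.

Definition arow (R : realType) (m n : nat) (A : 'M[int]_(m, n)) (i : 'I_m)
  (x : 'cV[R]_n) : R := (intmxR R A *m x) i 0.

Definition inC (R : realType) (m n : nat) (A : 'M[int]_(m, n)) (xs x : 'cV[R]_n) : Prop :=
  forall i : 'I_m,
    if arow A i xs != 0 then 0 <= Num.sg (arow A i xs) * arow A i x
    else arow A i x == 0.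

Definition spindle (R : realType) (m n : nat) (A : 'M[int]_(m, n)) (xs : 'cV[R]_n)
  (x : 'cV[R]_n) : Prop :=
  inC A xs x /\ inC A xs (xs - x).

Definition face (R : realType) (n : nat) (P F : 'cV[R]_n -> Prop) : Prop :=
  exists (c : 'cV[R]_n) (delta : R),
    (forall x, P x -> (c^T *m x) 0 0 <= delta) /\
    (forall x, F x <-> (P x /\ (c^T *m x) 0 0 = delta)).

Definition affdim (R : realType) (n : nat) (S : 'cV[R]_n -> Prop) (k : nat) : Prop :=
  exists x0 : 'cV[R]_n, S x0 /\
  exists V : 'M[R]_(k, n),
    (forall j : 'I_k, S (x0 + (row j V)^T)) /\
    row_free V /\
    (forall x, S x -> ((x - x0)^T <= V)%MS).

(* Main.v *)
Require Import Defs.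
From HB Require Import structures.
From mathcomp Require Import all_boot all_order all_algebra.
From mathcomp Require Import reals.
From mathcomp Require Import boolp zify.
From mathcomp Require Import ring lra.
Import Order.TTheory GRing.Theory Num.Theory.
Local Open Scope ring_scope.
Set Implicit Arguments. Unset Strict Implicit. Unset Printing Implicit Defensive.

Section Aux.
Variable R : realType.

Lemma small_t (I : finType) (P : I -> R -> Prop) :
  (forall i, exists2 e, 0 < e & forall t, 0 < t -> t <= e -> P i t) ->
  exists2 t, 0 < t & forall i, P i t.
Proof.
move=> H.
suff [e e0 He] : exists2 e, 0 < e & forall t, 0 < t -> t <= e ->
   forall i, i \in enum I -> P i t.
  by exists e => // i; apply: He => //; rewrite mem_enum.
elim: (enum I) => [|i s [e e0 He]]; first by exists 1.
have [e1 e10 He1] := H i.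
exists (Order.min e e1); first by rewrite lt_min e0 e10.
move=> t t0; rewrite le_min => /andP[te te1] j; rewrite inE => /orP[/eqP->|js].
  exact: He1.
exact: He.
Qed.

Lemma line_search (I : finType) (P : pred I) (a b : I -> R) :
  (forall i, P i -> 0 < a i) -> (exists i, P i && (b i < 0)) ->
  exists2 t, 0 < t & (forall i, P i -> 0 <= a i + t * b i) /\
     exists j, [/\ P j, b j < 0 & a j + t * b j = 0].
Proof.
move=> Ha [i0 Hi0].
case: (@arg_minP _ R I i0 (fun i => P i && (b i < 0)) (fun i => a i / - b i) Hi0).
move=> j /andP[Pj bj] Hmin.
have nbj : 0 < - b j by rewrite oppr_gt0.
exists (a j / - b j); first by rewrite divr_gt0 // Ha.
split; last first.
  exists j; split => //.
  have bj0 : b j != 0 by rewrite ltr0_neq0.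
  by field.
move=> i Pi; case: (ltP (b i) 0) => bi.
  have := Hmin i; rewrite Pi bi => /(_ isT) h.
  have nbi : 0 < - b i by rewrite oppr_gt0.
  rewrite ler_pdivlMr // mulrN in h.
  lra.
have := Ha i Pi; have : 0 <= a j / - b j * b i.
  by rewrite mulr_ge0 // ltW // divr_gt0 // Ha.
lra.
Qed.

Lemma strict_perturb (a lo hi b : R) : lo < a -> a < hi ->
  exists2 e, 0 < e & forall t, 0 < t -> t <= e -> lo <= a + t * b <= hi.
Proof.
move=> h1 h2.
set mu := Order.min (a - lo) (hi - a).
have mu0 : 0 < mu by rewrite lt_min !subr_gt0 h1 h2.
exists (mu / (`|b| + 1)); first by rewrite divr_gt0 // ltr_pwDr.
move=> t t0 te.
have : `|t * b| <= mu.
  rewrite normrM (gtr0_norm t0).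
  apply: (le_trans (ler_wpM2r (normr_ge0 b) te)).
  rewrite mulrAC ler_pdivrMr ?ltr_pwDr //.
  by rewrite ler_wpM2l ?(ltW mu0) // lerDl ler01.
move=> hb.
have hn1 := ler_norm (t * b); have hn2 := ler_norm (- (t * b)); rewrite normrN in hn2.
have : mu <= a - lo by rewrite ge_min lexx.
have : mu <= hi - a by rewrite ge_min lexx orbT.
move=> m1 m2; apply/andP; split; lra.
Qed.
End Aux.

Section Main.
Variables (R : realType) (m n : nat) (A : 'M[int]_(m, n)) (ys : 'cV[R]_n) (k : nat) (V : 'M[R]_(k, n)).
Hypothesis hrk : \rank (intmxR R A) = n.
Hypothesis hVk : \rank V = k.
Hypothesis hSV : forall x, spindle A ys x -> (x^T <= V)%MS.
Hypothesis hVL : forall i r, arow A i ys = 0 -> (r <= V)%MS -> arow A i r^T = 0.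

Local Notation S := (spindle A ys).
Local Notation inW x := (x^T <= V)%MS.

Definition sgi (i : 'I_m) := Num.sg (arow A i ys).
Definition phi i (x : 'cV[R]_n) := sgi i * arow A i x.

Lemma arowD i (x y : 'cV[R]_n) : arow A i (x + y) = arow A i x + arow A i y.
Proof. by rewrite /arow mulmxDr mxE. Qed.
Lemma arowZ i (a : R) (x : 'cV[R]_n) : arow A i (a *: x) = a * arow A i x.
Proof. by rewrite /arow -scalemxAr mxE. Qed.
Lemma arowN i (x : 'cV[R]_n) : arow A i (- x) = - arow A i x.
Proof. by rewrite /arow mulmxN mxE. Qed.
Lemma arowB i (x y : 'cV[R]_n) : arow A i (x - y) = arow A i x - arow A i y.
Proof. by rewrite arowD arowN. Qed.
Lemma arow0 (i : 'I_m) : arow A i (0 : 'cV[R]_n) = 0.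
Proof. by rewrite /arow mulmx0 mxE. Qed.

Lemma phiD i (x y : 'cV[R]_n) : phi i (x + y) = phi i x + phi i y.
Proof. by rewrite /phi arowD mulrDr. Qed.
Lemma phiZ i (a : R) (x : 'cV[R]_n) : phi i (a *: x) = a * phi i x.
Proof. by rewrite /phi arowZ mulrCA. Qed.
Lemma phiN i (x : 'cV[R]_n) : phi i (- x) = - phi i x.
Proof. by rewrite /phi arowN mulrN. Qed.
Lemma phiB i (x y : 'cV[R]_n) : phi i (x - y) = phi i x - phi i y.
Proof. by rewrite phiD phiN. Qed.
Lemma phi0 (i : 'I_m) : phi i 0 = 0.
Proof. by rewrite /phi arow0 mulr0. Qed.

Lemma phiys_ge0 (i : 'I_m) : 0 <= phi i ys.
Proof. by rewrite /phi /sgi -normrEsg normr_ge0. Qed.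

Lemma phiys0 (i : 'I_m) : phi i ys = 0 -> arow A i ys = 0.
Proof. by rewrite /phi /sgi -normrEsg => /eqP; rewrite normr_eq0 => /eqP. Qed.

Lemma phi_ys0 (i : 'I_m) (x : 'cV[R]_n) : phi i ys = 0 -> phi i x = 0.
Proof. by move/phiys0 => h; rewrite /phi /sgi h sgr0 mul0r. Qed.

Lemma phiys_gt0 (i : 'I_m) : phi i ys != 0 -> 0 < phi i ys.
Proof. by move=> h; rewrite lt_def h phiys_ge0. Qed.

Lemma S_ys : S ys.
Proof.
split=> i; case: ifP => h.
- by rewrite -normrEsg normr_ge0.
- by move/negbFE: h.
- rewrite arowB. by rewrite subrr mulr0.
- by rewrite arowB subrr.
Qed.

Lemma inW_ys : inW ys.
Proof. exact: hSV S_ys. Qed.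

Lemma spE (x : 'cV[R]_n) : S x <-> inW x /\ forall i, 0 <= phi i x <= phi i ys.
Proof.
split.
  move=> Sx; split; first exact: hSV.
  move=> i; case: Sx => /(_ i) h1 /(_ i) h2.
  case: (arow A i ys =P 0) => [e|/eqP ne].
    by rewrite /phi /sgi e sgr0 !mul0r lexx.
  move: h1 h2; rewrite ne /= arowB mulrBr -/(phi i x) => h1 h2.
  by rewrite h1 /= -subr_ge0.
move=> [wx hx]; split=> i.
  case: ifP => [_|/negbFE/eqP e]; first by case/andP: (hx i).
  by have := hVL e wx; rewrite trmxK => ->.
case: ifP => [_|/negbFE/eqP e].
  by rewrite arowB mulrBr subr_ge0; case/andP: (hx i).
by have := hVL e wx; rewrite trmxK arowB e => ->; rewrite subrr.
Qed.

Lemma S0 : S 0.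
Proof. by apply/spE; split; [rewrite trmx0 sub0mx | move=> i; rewrite phi0 lexx phiys_ge0]. Qed.

Lemma Sref (x : 'cV[R]_n) : S x -> S (ys - x).
Proof.
case/spE => wx hx; apply/spE; split.
  by rewrite linearB /= addmx_sub ?eqmx_opp ?inW_ys.
move=> i; rewrite phiB; case/andP: (hx i) => a b; apply/andP; split; lra.
Qed.

Lemma phi_inj (x : 'cV[R]_n) : inW x -> (forall i, phi i x = 0) -> x = 0.
Proof.
move=> wx h.
have e : intmxR R A *m x = 0.
  apply/matrixP => i j; rewrite (ord1 j) [RHS]mxE -/(arow A i x).
  case: (arow A i ys =P 0) => [e|/eqP ne]; first by have := hVL e wx; rewrite trmxK.
  have := h i; rewrite /phi /sgi => /eqP; rewrite mulf_eq0 sgr_eq0 (negbTE ne) /=.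
  by move/eqP.
have rf : row_free (intmxR R A)^T by rewrite /row_free mxrank_tr hrk.
apply: trmx_inj; apply: (row_free_inj rf).
by rewrite -trmx_mul e !trmx0 mul0mx.
Qed.

Definition Phi : 'M[R]_(m,n) := \matrix_(i,j) (sgi i * intmxR R A i j).
Lemma PhiE i (x : 'cV[R]_n) : (Phi *m x) i 0 = phi i x.
Proof.
rewrite !mxE /phi /arow mxE mulr_sumr; apply: eq_bigr => j _; by rewrite !mxE mulrA.
Qed.

Definition dmx (T : {set 'I_m}) : 'M[R]_m := diag_mx (\row_i ((i \in T)%:R)).
Definition KT (T : {set 'I_m}) := kermx (Phi^T *m dmx T).

Lemma KTPr T (r : 'rV[R]_n) : (r <= KT T)%MS <-> forall i, i \in T -> phi i r^T = 0.
Proof.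
rewrite (sameP sub_kermxP eqP) mulmxA -[r]trmxK -trmx_mul trmxK mul_mx_diag; split.
  move/eqP/matrixP => h i iT; have := h 0 i; rewrite !mxE iT mulr1 => e.
  by rewrite -PhiE mxE.
move=> h; apply/eqP/matrixP => a i; rewrite (ord1 a) !mxE.
case: (boolP (i \in T)) => iT; last by rewrite mulr0.
by have := h i iT; rewrite -PhiE mxE => ->; rewrite mul0r.
Qed.

Definition Sp (T : {set 'I_m}) := (V :&: KT T)%MS.
Definition dim T := \rank (Sp T).

Lemma SpPr T (r : 'rV[R]_n) : (r <= Sp T)%MS <-> (r <= V)%MS /\ forall i, i \in T -> phi i r^T = 0.
Proof.
rewrite /Sp sub_capmx; split => [/andP[a /KTPr b]|[a /KTPr b]] //.
by rewrite a b.
Qed.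

Lemma SpP T (x : 'cV[R]_n) : (x^T <= Sp T)%MS <-> inW x /\ forall i, i \in T -> phi i x = 0.
Proof. by rewrite SpPr trmxK. Qed.

Lemma dim_le (T : {set 'I_m}) : (dim T <= k)%N.
Proof. by rewrite -hVk; apply: mxrankS; apply: capmxSl. Qed.

Lemma SpS (T1 T2 : {set 'I_m}) : T1 \subset T2 -> (Sp T2 <= Sp T1)%MS.
Proof.
move=> sub; apply/row_subP => j; have /SpPr [a b] := row_sub j (Sp T2).
by apply/SpPr; split => // i iT; apply: b; apply: (subsetP sub).
Qed.

Lemma dimS (T1 T2 : {set 'I_m}) : T1 \subset T2 -> (dim T2 <= dim T1)%N.
Proof. by move/SpS/mxrankS. Qed.

Lemma Sp_setT : (Sp setT <= (0 : 'M[R]_n))%MS.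
Proof.
apply/row_subP => j; have /SpPr [a b] := row_sub j (Sp setT).
have -> : row j (Sp setT) = 0.
  apply: trmx_inj; rewrite trmx0; apply: phi_inj; first by rewrite trmxK.
  by move=> i; apply: b; rewrite in_setT.
exact: sub0mx.
Qed.

Lemma dim_setT : dim setT = 0%N.
Proof. by apply/eqP; rewrite -leqn0 -(mxrank0 R n n); apply: mxrankS Sp_setT. Qed.

Lemma dim_I0 (T : {set 'I_m}) : (forall i, i \in T -> phi i ys = 0) -> dim T = k.
Proof.
move=> h; apply/eqP; rewrite eqn_leq dim_le /= -{1}hVk; apply: mxrankS.
apply/row_subP => j; apply/SpPr; split; first exact: row_sub.
by move=> i iT; apply: phi_ys0; apply: h.
Qed.

Definition Z (x : 'cV[R]_n) := [set i | phi i x == 0].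
Definition Zf (x : 'cV[R]_n) := [set i | phi i x == phi i ys].

Lemma inZ x i : (i \in Z x) = (phi i x == 0). Proof. by rewrite inE. Qed.
Lemma inZf x i : (i \in Zf x) = (phi i x == phi i ys). Proof. by rewrite inE. Qed.

Lemma Zf_ref x : Zf x = Z (ys - x).
Proof. by apply/setP => i; rewrite inZ inZf phiB subr_eq0 eq_sym. Qed.

Lemma trD (x y : 'cV[R]_n) : (x + y)^T = x^T + y^T. Proof. by rewrite linearD. Qed.
Lemma trZ (a : R) (x : 'cV[R]_n) : (a *: x)^T = a *: x^T. Proof. by rewrite linearZ. Qed.
Lemma trN (x : 'cV[R]_n) : (- x)^T = - x^T. Proof. by rewrite linearN. Qed.

Lemma subN p (r : 'rV[R]_n) (X : 'M[R]_(p, n)) : (- r <= X)%MS = (r <= X)%MS.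
Proof.
apply/idP/idP => h; last by rewrite -scaleN1r scalemx_sub.
by rewrite -(opprK r) -scaleN1r scalemx_sub.
Qed.

Lemma subZ p (a : R) (r : 'rV[R]_n) (X : 'M[R]_(p, n)) : a != 0 -> (a *: r <= X)%MS = (r <= X)%MS.
Proof.
move=> a0; apply/idP/idP => h; last by rewrite scalemx_sub.
by rewrite -(scalerK a0 r) scalemx_sub.
Qed.

Lemma rank_add_row p (X : 'M[R]_(p, n)) (w : 'rV[R]_n) :
  ~~ (w <= X)%MS -> \rank (X + w)%MS = (\rank X).+1.
Proof.
move=> wX; apply/eqP; rewrite eqn_leq; apply/andP; split.
  have := mxrank_adds_leqif X w; case=> h _; apply: (leq_trans h).
  by rewrite -[(\rank X).+1]addn1 leq_add2l rank_leq_row.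
apply: rank_ltmx; rewrite ltmxE addsmxSl /=; apply: contra wX => h.
exact: submx_trans (addsmxSr X w) h.
Qed.

Definition Z1 (T : {set 'I_m}) (w : 'cV[R]_n) := [set i in T | phi i w == 0].
Definition admG (T : {set 'I_m}) (w : 'cV[R]_n) :=
  [/\ inW w, forall i, i \in T -> 0 <= phi i w & exists2 i, i \in T & phi i w != 0].

Lemma Z1_sub (T : {set 'I_m}) w : Z1 T w \subset T.
Proof. by apply/subsetP => i; rewrite inE => /andP[]. Qed.

Lemma admG_dim (T : {set 'I_m}) w : admG T w -> ((dim T).+1 <= dim (Z1 T w))%N.
Proof.
case=> wW wpos [i0 i0T i0nz].
have wS : (w^T <= Sp (Z1 T w))%MS.
  by apply/SpP; split => // i; rewrite inE => /andP[_ /eqP].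
have wX : ~~ (w^T <= Sp T)%MS.
  by apply/negP => /SpP[_ /(_ i0 i0T) e]; rewrite e eqxx in i0nz.
rewrite -(rank_add_row wX); apply: mxrankS; rewrite addsmx_sub wS andbT.
exact: SpS (Z1_sub T w).
Qed.

Lemma grade_step (T : {set 'I_m}) w : admG T w -> dim (Z1 T w) != (dim T).+1 ->
  exists w', admG T w' /\ Z1 T w \proper Z1 T w'.
Proof.
move=> adm hne; have hle := admG_dim adm.
case: adm => wW wpos [i0 i0T i0nz].
set Z1w := Z1 T w.
have wX : ~~ (w^T <= Sp T)%MS.
  by apply/negP => /SpP[_ /(_ i0 i0T) e]; rewrite e eqxx in i0nz.
have hlt : ((dim T).+1 < dim Z1w)%N by rewrite ltn_neqAle eq_sym hne hle.
have : ~~ (Sp Z1w <= Sp T + w^T)%MS.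
  apply/negP => /mxrankS; rewrite (rank_add_row wX) -/(dim T) -/(dim Z1w).
  by rewrite leqNgt hlt.
case/row_subPn => j hj.
set q := (row j (Sp Z1w))^T.
have qS : (q^T <= Sp Z1w)%MS by rewrite trmxK row_sub.
have qX : ~~ (q^T <= Sp T + w^T)%MS by rewrite trmxK.
have [i1 [i1T i1Z i1q]] : exists i, [/\ i \in T, i \notin Z1w & phi i q != 0].
  case: (pselect (exists i, [/\ i \in T, i \notin Z1w & phi i q != 0])) => // hno.
  exfalso; move/negP: qX; apply; apply: submx_trans (addsmxSl _ _).
  case/SpP: qS => qW qz; apply/SpP; split => // i iT.
  case: (boolP (i \in Z1w)) => iZ; first exact: qz.
  by case: (eqVneq (phi i q) 0) => // hq; case: hno; exists i.
pose sg := if phi i1 q < 0 then 1 else -1 : R.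
have sg0 : sg != 0 by rewrite /sg; case: ifP => _; rewrite ?oppr_eq0 oner_eq0.
pose q' := sg *: q.
have q'S : (q'^T <= Sp Z1w)%MS by rewrite trZ scalemx_sub.
have q'X : ~~ (q'^T <= Sp T + w^T)%MS by rewrite trZ subZ.
have i1q' : phi i1 q' < 0.
  rewrite phiZ /sg; case: ifP => h; first by rewrite mul1r.
  rewrite mulN1r oppr_lt0 lt_def i1q /=; by rewrite leNgt h.
have Ha : forall i, (i \in T) && (i \notin Z1w) -> 0 < phi i w.
  move=> i /andP[iT iZ]; rewrite lt_def wpos // andbT.
  by move: iZ; rewrite inE iT.
have hex : exists i, ((i \in T) && (i \notin Z1w)) && (phi i q' < 0).
  by exists i1; rewrite i1T i1Z i1q'.
have [t t0 [hpos [j1 [Pj bj ej]]]] := @line_search R _ _ (fun i => phi i w) (fun i => phi i q') Ha hex.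
pose w' := w + t *: q'.
have phw' i : phi i w' = phi i w + t * phi i q' by rewrite phiD phiZ.
have q'W : inW q' by apply: submx_trans q'S (capmxSl _ _).
have w'W : inW w' by rewrite trD trZ addmx_sub // scalemx_sub.
have w'pos : forall i, i \in T -> 0 <= phi i w'.
  move=> i iT; case: (boolP (i \in Z1w)) => iZ.
    case/SpP: q'S => _ /(_ i iZ) e; rewrite phw' e mulr0 addr0.
    by move: iZ; rewrite inE => /andP[_ /eqP ->].
  by rewrite phw'; apply: hpos; rewrite iT iZ.
exists w'; split.
  split => //.
  case: (pselect (exists2 i, i \in T & phi i w' != 0)) => // hno.
  exfalso; move/negP: q'X; apply.
  have w'S : (w'^T <= Sp T)%MS.
    apply/SpP; split => // i iT; case: (eqVneq (phi i w') 0) => // hz; case: hno; by exists i.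
  have t0' : t != 0 by rewrite lt0r_neq0.
  have -> : q'^T = t^-1 *: (w'^T - w^T).
    by rewrite /w' trD addrC addKr [(t *: q')^T]trZ scalerA mulVf // scale1r.
  rewrite scalemx_sub // addmx_sub //; first exact: submx_trans w'S (addsmxSl _ _).
  by rewrite subN addsmxSr.
apply/properP; split.
  apply/subsetP => i; rewrite !inE => /andP[iT /eqP e]; rewrite iT /=.
  case/SpP: q'S => _ /(_ i); rewrite inE iT e eqxx => /(_ isT) e2.
  by rewrite phw' e e2 mulr0 addr0.
exists j1; last by case/andP: Pj.
case/andP: Pj => jT _; by rewrite inE jT phw' ej eqxx.
Qed.

Lemma grade_ext (T : {set 'I_m}) : forall N w, (#|T| - #|Z1 T w| <= N)%N -> admG T w ->
  exists w', admG T w' /\ dim (Z1 T w') = (dim T).+1.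
Proof.
elim=> [|N IH] w hN adm.
  case: (eqVneq (dim (Z1 T w)) (dim T).+1) => h; first by exists w.
  have [w' [_ pr]] := grade_step adm h.
  have := proper_card pr; have := subset_leq_card (Z1_sub T w'); lia.
case: (eqVneq (dim (Z1 T w)) (dim T).+1) => h; first by exists w.
have [w' [adm' pr]] := grade_step adm h.
apply: (IH w') => //.
have := proper_card pr; have := subset_leq_card (Z1_sub T w'); lia.
Qed.

Lemma grade1 z : S z -> (dim (Z z) < k)%N ->
  exists z', [/\ S z', Z z' \subset Z z & dim (Z z') = (dim (Z z)).+1].
Proof.
move=> Sz hlt; set T := Z z.
have adm0 : admG T ys.
  split; [exact: inW_ys | by move=> i _; exact: phiys_ge0 |].
  case: (pselect (exists2 i, i \in T & phi i ys != 0)) => // hno.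
  exfalso; move: hlt; rewrite dim_I0 ?ltnn // => i iT.
  by case: (eqVneq (phi i ys) 0) => // hz; case: hno; exists i.
have [w [[wW wpos _] hd]] := grade_ext (leqnn _) adm0.
case/spE: Sz => zW zb.
pose pz t := 2^-1 *: z + t *: w.
have phpz t i : phi i (pz t) = phi i z / 2 + t * phi i w.
  by rewrite /pz phiD !phiZ mulrC.
have [t t0 Ht] : exists2 t, 0 < t & forall i,
    0 <= phi i (pz t) <= phi i ys /\ (phi i (pz t) == 0) = (i \in Z1 T w).
  apply: small_t => i.
  case: (eqVneq (phi i ys) 0) => hy.
    exists 1 => // t _ _.
    rewrite !(phi_ys0 _ hy) lexx eqxx inE /T inZ (phi_ys0 _ hy) eqxx.
    by rewrite (phi_ys0 _ hy) eqxx.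
  have hy0 := phiys_gt0 hy.
  case/andP: (zb i) => z0 zy.
  case: (boolP (i \in T)) => iT.
    have ez : phi i z = 0 by move: iT; rewrite /T inZ => /eqP.
    case: (eqVneq (phi i w) 0) => hw.
      exists 1 => // t _ _; rewrite phpz ez hw mulr0 mul0r addr0 lexx ltW //.
      by rewrite eqxx inE iT hw eqxx.
    have hw0 : 0 < phi i w by rewrite lt_def hw wpos.
    exists (phi i ys / phi i w); first by rewrite divr_gt0.
    move=> t t0 te; rewrite phpz ez mul0r add0r.
    have tw0 : 0 < t * phi i w by rewrite mulr_gt0.
    rewrite ltW //= -ler_pdivlMr // te; split => //.
    by rewrite inE iT (negbTE hw) gt_eqF.
  have zp : 0 < phi i z by rewrite lt_def z0 andbT; move: iT; rewrite /T inZ.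
  have [e e0 He] := @strict_perturb R (phi i z / 2) (phi i z / 4) (phi i z) (phi i w) ltac:(lra) ltac:(lra).
  exists e => // t t0 te; rewrite phpz; have /andP[h1 h2] := He t t0 te.
  split; first by apply/andP; split; lra.
  rewrite inE (negbTE iT) /=; apply/negbTE; rewrite gt_eqF //; lra.
exists (pz t); split.
- apply/spE; split; first by rewrite /pz trD !trZ addmx_sub // scalemx_sub.
  by move=> i; case: (Ht i).
- apply/subsetP => i; rewrite inZ; case: (Ht i) => _ -> /(subsetP (Z1_sub T w)).
  done.
- have -> : Z (pz t) = Z1 T w by apply/setP => i; rewrite inZ; case: (Ht i).
  exact: hd.
Qed.

Lemma grade0 e z : S z -> (dim (Z z) <= e)%N -> (e <= k)%N ->
  exists p, [/\ S p, Z p \subset Z z & dim (Z p) = e].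
Proof.
move=> Sz h1 h2; move: {2}(e - dim (Z z))%N (leqnn (e - dim (Z z))%N) => N.
elim: N z Sz h1 => [|N IH] z Sz h1 hN.
  by exists z; split => //; lia.
case: (eqVneq (dim (Z z)) e) => he; first by exists z.
have [z' [Sz' sub hd]] := grade1 Sz ltac:(lia).
have [p [Sp sp hp]] := IH z' Sz' ltac:(lia) ltac:(lia).
by exists p; split => //; apply: subset_trans sp sub.
Qed.

Lemma gradef e z : S z -> (dim (Zf z) <= e)%N -> (e <= k)%N ->
  exists p, [/\ S p, Zf p \subset Zf z & dim (Zf p) = e].
Proof.
move=> Sz h1 h2; rewrite Zf_ref in h1.
have [p [Sp sp hp]] := grade0 (Sref Sz) h1 h2.
exists (ys - p); split; first exact: Sref.
  by rewrite !Zf_ref opprB addrC subrK.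
by rewrite Zf_ref opprB addrC subrK.
Qed.

Definition TS z := Z z :|: Zf z.
Definition vtx z := S z /\ forall x, inW x -> (forall i, i \in TS z -> phi i x = 0) -> x = 0.
Definition c (x : 'cV[R]_n) := \sum_(i < m) phi i x.
Lemma cD x y : c (x + y) = c x + c y.
Proof. by rewrite /c -big_split; apply: eq_bigr => i _; rewrite phiD. Qed.
Lemma cZ (a : R) x : c (a *: x) = a * c x.
Proof. by rewrite /c mulr_sumr; apply: eq_bigr => i _; rewrite phiZ. Qed.
Lemma cN x : c (- x) = - c x.
Proof. by rewrite -scaleN1r cZ mulN1r. Qed.

Definition g z i v := if i \in Z z then phi i v else - phi i v.
Lemma gD z i v u : g z i (v + u) = g z i v + g z i u.
Proof. by rewrite /g phiD; case: ifP => _ //; rewrite opprD. Qed.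
Lemma gZ z i (a : R) v : g z i (a *: v) = a * g z i v.
Proof. by rewrite /g phiZ; case: ifP => _ //; rewrite mulrN. Qed.
Lemma g_eq0 z i v : (g z i v == 0) = (phi i v == 0).
Proof. by rewrite /g; case: ifP => _ //; rewrite oppr_eq0. Qed.

Definition admE z w := [/\ inW w, forall i, i \in TS z -> 0 <= g z i w & 0 < c w].
Definition tight z w := [set i in TS z | phi i w == 0].
Lemma tight_sub z w : tight z w \subset TS z.
Proof. by apply/subsetP => i; rewrite inE => /andP[]. Qed.

Lemma edge_stepE z w : vtx z -> admE z w -> (1 < dim (tight z w))%N ->
  exists w', admE z w' /\ tight z w \proper tight z w'.
Proof.
move=> [Sz hv] [wW wg cw] hd.
set L := Sp (tight z w).
have wL : (w^T <= L)%MS by apply/SpP; split => // i; rewrite inE => /andP[_ /eqP].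
have : ~~ (L <= w^T)%MS.
  apply/negP => /mxrankS; rewrite -/(dim (tight z w)) => h.
  by have := leq_trans hd (leq_trans h (rank_leq_row _)); rewrite ltnn.
case/row_subPn => j hj.
set q := (row j L)^T.
have qL : (q^T <= L)%MS by rewrite trmxK row_sub.
have qw : ~~ (q^T <= w^T)%MS by rewrite trmxK.
have cw0 : c w != 0 by rewrite gt_eqF.
pose q' := q - (c q / c w) *: w.
have q'L : (q'^T <= L)%MS by rewrite /q' trD trN trZ addmx_sub // subN scalemx_sub.
have cq' : c q' = 0 by rewrite /q' cD cN cZ; field.
have [i1 [i1T i1t i1q]] : exists i, [/\ i \in TS z, i \notin tight z w & phi i q' != 0].
  case: (pselect (exists i, [/\ i \in TS z, i \notin tight z w & phi i q' != 0])) => // hno.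
  exfalso; move/negP: qw; apply.
  have q'0 : q' = 0.
    apply: hv; first exact: submx_trans q'L (capmxSl _ _).
    move=> i iT; case: (boolP (i \in tight z w)) => it.
      by case/SpP: q'L => _ /(_ i it).
    by case: (eqVneq (phi i q') 0) => // hq; case: hno; exists i.
  have -> : q = (c q / c w) *: w by apply/eqP; rewrite -subr_eq0; apply/eqP.
  by rewrite trZ scalemx_sub.
have gq : g z i1 q' != 0 by rewrite g_eq0.
pose sg := if g z i1 q' < 0 then 1 else -1 : R.
pose q'' := sg *: q'.
have gq'' : g z i1 q'' < 0.
  rewrite /q'' gZ /sg; case: ifP => h; first by rewrite mul1r.
  by rewrite mulN1r oppr_lt0 lt_def gq /= leNgt h.
have q''L : (q''^T <= L)%MS by rewrite /q'' trZ scalemx_sub.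
have cq'' : c q'' = 0 by rewrite /q'' cZ cq' mulr0.
have Ha : forall i, (i \in TS z) && (i \notin tight z w) -> 0 < g z i w.
  move=> i /andP[iT it]; rewrite lt_def wg // andbT g_eq0.
  by move: it; rewrite inE iT.
have hex : exists i, ((i \in TS z) && (i \notin tight z w)) && (g z i q'' < 0).
  by exists i1; rewrite i1T i1t gq''.
have [t t0 [hpos [j1 [Pj bj ej]]]] := @line_search R _ _ (fun i => g z i w) (fun i => g z i q'') Ha hex.
pose w' := w + t *: q''.
have gw' i : g z i w' = g z i w + t * g z i q'' by rewrite gD gZ.
have phw' i : phi i w' = phi i w + t * phi i q'' by rewrite phiD phiZ.
have q''W : inW q'' by apply: submx_trans q''L (capmxSl _ _).
exists w'; split.
  split.
  - by rewrite /w' trD trZ addmx_sub // scalemx_sub.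
  - move=> i iT; case: (boolP (i \in tight z w)) => it.
      have e1 : phi i w = 0 by move: it; rewrite inE => /andP[_ /eqP].
      have e2 : phi i q'' = 0 by case/SpP: q''L => _ /(_ i it).
      by rewrite gw' /g e1 e2 oppr0 if_same mulr0 addr0.
    by rewrite gw'; apply: hpos; rewrite iT it.
  - by rewrite /w' cD cZ cq'' mulr0 addr0.
apply/properP; split.
  apply/subsetP => i it; have := it; rewrite !inE => /andP[iT /eqP e]; rewrite iT /=.
  by case/SpP: q''L => _ /(_ i it) e2; rewrite phw' e e2 mulr0 addr0.
exists j1; last by case/andP: Pj.
case/andP: Pj => jT _; rewrite inE jT /= -(g_eq0 z) gw' ej //.
Qed.

Lemma edge_ext z : vtx z -> forall N w, (#|TS z| - #|tight z w| <= N)%N -> admE z w ->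
  exists w', admE z w' /\ (dim (tight z w') <= 1)%N.
Proof.
move=> hv; elim=> [|N IH] w hN adm.
  case: (leqP (dim (tight z w)) 1) => h; first by exists w.
  have [w' [_ pr]] := edge_stepE hv adm h.
  have := proper_card pr; have := subset_leq_card (tight_sub z w'); lia.
case: (leqP (dim (tight z w)) 1) => h; first by exists w.
have [w' [adm' pr]] := edge_stepE hv adm h.
apply: (IH w') => //.
have := proper_card pr; have := subset_leq_card (tight_sub z w'); lia.
Qed.

Lemma c0 : c 0 = 0.
Proof. by rewrite /c big1 // => i _; rewrite phi0. Qed.

Lemma edge_step z : vtx z -> z != ys ->
  exists z', [/\ vtx z', c z < c z' & (dim (Z z') + dim (Zf z) <= k.+1)%N].
Proof.
move=> hv zy; have [Sz hvz] := hv.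
have [zW zb] := spE z; have {zW zb} [zW zb] := zW Sz.
have adm0 : admE z (ys - z).
  split.
  - by apply: hSV; apply: Sref.
  - move=> i iT; rewrite /g phiB; case: ifP => iZ.
      by move: iZ; rewrite inZ => /eqP ->; rewrite subr0 phiys_ge0.
    have : i \in Zf z by move: iT; rewrite inE iZ.
    by rewrite inZf => /eqP ->; rewrite subrr oppr0.
  - rewrite lt_def sumr_ge0 ?andbT; last by move=> i _; rewrite phiB subr_ge0; case/andP: (zb i).
    apply/eqP => /psumr_eq0P h.
    have : ys - z = 0.
      apply: phi_inj; first by apply: hSV; apply: Sref.
      by move=> i; apply: h => // j _; rewrite phiB subr_ge0; case/andP: (zb j).
    by move/eqP; rewrite subr_eq0 eq_sym (negbTE zy).
have [w [[wW wg cw] hd]] := edge_ext hv (leqnn _) adm0.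
set L := Sp (tight z w).
have wL : (w^T <= L)%MS by apply/SpP; split => // i; rewrite inE => /andP[_ /eqP].
have w0 : w != 0 by apply/eqP => e; move: cw; rewrite e c0 ltxx.
have Lw : forall x, (x^T <= L)%MS -> exists a, x = a *: w.
  move=> x xL.
  have Lsub : (L <= w^T)%MS.
    have := mxrank_leqif_sup wL; case=> _ <-.
    rewrite eqn_leq mxrankS //=.
    apply: (leq_trans hd); rewrite lt0n mxrank_eq0.
    by apply: contra w0 => /eqP e; rewrite -[w]trmxK e trmx0.
  have := submx_trans xL Lsub; case/sub_rVP => a ha.
  by exists a; apply: trmx_inj; rewrite trZ.
have [i0 wi0] : exists i, 0 < phi i w.
  case: (pselect (exists i, 0 < phi i w)) => // hno; exfalso.
  have : c w <= 0.
    by apply: sumr_le0 => i _; rewrite leNgt; apply/negP => h; apply: hno; exists i.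
  by rewrite leNgt cw.
pose a (p : bool * 'I_m) := if p.1 then phi p.2 ys - phi p.2 z else phi p.2 z.
pose bb (p : bool * 'I_m) := if p.1 then - phi p.2 w else phi p.2 w.
have Ha : forall p, (fun p => 0 < a p) p -> 0 < a p by [].
have hex : exists p, (0 < a p) && (bb p < 0).
  exists (true, i0); rewrite /a /bb /= oppr_lt0 wi0 andbT.
  case/andP: (zb i0) => _ h; rewrite lt_def subr_ge0 h andbT subr_eq0.
  apply/negP => /eqP e.
  have iT : i0 \in TS z by rewrite inE inZf e eqxx orbT.
  have := wg i0 iT; rewrite /g; case: ifP => iZ.
    have : phi i0 ys = 0 by move: iZ; rewrite inZ -e => /eqP.
    by move/(phi_ys0 w) => e2; rewrite e2 ltxx in wi0.
  by rewrite oppr_ge0 leNgt wi0.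
have [t t0 [hpos [p1 [Pp1 bp1 ep1]]]] := @line_search R _ _ a bb Ha hex.
pose z' := z + t *: w.
have phz i : phi i z' = phi i z + t * phi i w by rewrite phiD phiZ.
have Sz' : S z'.
  apply/spE; split; first by rewrite trD trZ addmx_sub // scalemx_sub.
  move=> i; case/andP: (zb i) => h1 h2; rewrite phz; apply/andP; split.
    case: (ltP 0 (phi i z)) => hz; first by have := hpos (false, i) hz.
    have ez : phi i z = 0 by apply/eqP; rewrite eq_le hz h1.
    have iT : i \in TS z by rewrite inE inZ ez eqxx.
    have := wg i iT; rewrite /g inZ ez eqxx => hw.
    by rewrite add0r mulr_ge0 // ltW.
  case: (ltP 0 (phi i ys - phi i z)) => hz.
    by have := hpos (true, i) hz; rewrite /a /bb /= mulrN; lra.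
  have ez : phi i z = phi i ys by apply/eqP; rewrite eq_le h2 /=; rewrite subr_le0 in hz.
  have iT : i \in TS z by rewrite inE inZf ez eqxx orbT.
  have := wg i iT; rewrite /g; case: ifP => iZ.
    have : phi i ys = 0 by move: iZ; rewrite inZ ez => /eqP.
    by move/(phi_ys0 w) => ->; rewrite mulr0 addr0.
  rewrite oppr_ge0 => hw; rewrite ez; have : t * phi i w <= 0 by rewrite mulr_ge0_le0 // ltW.
  lra.
have tT : forall i, i \in tight z w -> i \in TS z'.
  move=> i; rewrite !inE => /andP[iT /eqP e].
  by rewrite phz e mulr0 addr0.
have [j [jT jw]] : exists j, j \in TS z' /\ phi j w != 0.
  case: p1 Pp1 bp1 ep1 => [[] j]; rewrite /a /bb /= => _ bj ej; exists j.
    split; last by rewrite -oppr_eq0 lt_eqF.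
    by rewrite inE inZf phz; apply/orP; right; apply/eqP; rewrite mulrN in ej; lra.
  by split; [rewrite inE inZ phz ej eqxx | rewrite lt_eqF].
exists z'; split.
- split => // x xW xz.
  have [b eb] : exists b, x = b *: w.
    apply: Lw; apply/SpP; split => // i it; exact: xz (tT i it).
  have := xz j jT; rewrite eb phiZ => /eqP; rewrite mulf_eq0 (negbTE jw) orbF => /eqP b0.
  by rewrite b0 scale0r.
- by rewrite /z' cD cZ ltrDl mulr_gt0.
- rewrite /dim -mxrank_sum_cap.
  have h1 : (\rank (Sp (Z z') + Sp (Zf z))%MS <= k)%N.
    by rewrite -hVk; apply: mxrankS; rewrite addsmx_sub !capmxSl.
  have h2 : (\rank (Sp (Z z') :&: Sp (Zf z))%MS <= 1)%N.
    apply: leq_trans hd; apply: mxrankS; apply/row_subP => r.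
    have := row_sub r (Sp (Z z') :&: Sp (Zf z))%MS; rewrite sub_capmx => /andP[/SpPr [rW r1] /SpPr [_ r2]].
    apply/SpPr; split => // i; rewrite !inE => /andP[iT /eqP e].
    case: (boolP (i \in Z z)) => iZ.
      apply: r1; rewrite inZ phz e mulr0 addr0; by rewrite -inZ.
    by apply: r2; rewrite inZf; move: iT; rewrite inZ in iZ; rewrite (negbTE iZ).
  lia.
Qed.

Lemma vtx_uniq z1 z2 : vtx z1 -> S z2 -> Z z1 = Z z2 -> Zf z1 = Zf z2 -> z1 = z2.
Proof.
move=> [S1 hv] S2 e1 e2; apply/eqP; rewrite -subr_eq0; apply/eqP; apply: hv.
  by rewrite trD trN; apply: addmx_sub; [apply: hSV | rewrite subN; apply: hSV].
move=> i; rewrite inE => /orP[h|h]; rewrite phiB.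
  have h2 : i \in Z z2 by rewrite -e1.
  by move: h h2; rewrite !inZ => /eqP -> /eqP ->; rewrite subr0.
have h2 : i \in Zf z2 by rewrite -e2.
by move: h h2; rewrite !inZf => /eqP -> /eqP ->; rewrite subrr.
Qed.

Lemma Z0 : Z 0 = setT.
Proof. by apply/setP => i; rewrite inZ phi0 eqxx in_setT. Qed.

Lemma vtx0 : vtx 0.
Proof.
split; first exact: S0.
move=> x xW h; apply: phi_inj => // i; apply: h; by rewrite inE Z0 in_setT.
Qed.

Lemma dimZf0 : dim (Zf 0) = k.
Proof. by apply: dim_I0 => i; rewrite inZf phi0 => /eqP <-. Qed.

Lemma dimZf_ys : dim (Zf ys) = 0%N.
Proof.
have -> : Zf ys = setT by apply/setP => i; rewrite inZf eqxx in_setT.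
exact: dim_setT.
Qed.

Lemma main_comb d : (d <= k)%N ->
  exists z, [/\ S z, (dim (Zf z) <= d)%N & (dim (Z z) <= k - d)%N].
Proof.
move=> dk.
case: (eqVneq d k) => [->|dnk].
  by exists 0; split; [exact: S0 | rewrite dimZf0 | rewrite Z0 dim_setT].
pose cand z := vtx z /\ (d < dim (Zf z))%N.
pose Nset z := [set p : {set 'I_m} * {set 'I_m} |
   `[< exists z2, [/\ cand z2, (Z z2, Zf z2) = p & c z < c z2] >] ].
suff : forall N z, (#|Nset z| <= N)%N -> cand z ->
    exists z, [/\ S z, (dim (Zf z) <= d)%N & (dim (Z z) <= k - d)%N].
  apply => //; split; [exact: vtx0 | rewrite dimZf0; lia].
elim=> [|N IH] z hN [hv hd].
- have zy : z != ys by apply/eqP => e; move: hd; rewrite e dimZf_ys.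
  have [z' [hv' cz hadj]] := edge_step hv zy.
  case: (leqP (dim (Zf z')) d) => h.
    by exists z'; split => //; [case: hv' | lia].
  have hin : (Z z', Zf z') \in Nset z by rewrite inE; apply/asboolP; exists z'.
  have : (0 < #|Nset z|)%N by apply/card_gt0P; exists (Z z', Zf z').
  lia.
- have zy : z != ys by apply/eqP => e; move: hd; rewrite e dimZf_ys.
  have [z' [hv' cz hadj]] := edge_step hv zy.
  case: (leqP (dim (Zf z')) d) => h.
    by exists z'; split => //; [case: hv' | lia].
  apply: (IH z') => //.
  have pr : Nset z' \proper Nset z.
    apply/properP; split.
      apply/subsetP => p; rewrite !inE => /asboolP [z2 [c2 e2 l2]].
      by apply/asboolP; exists z2; split => //; apply: lt_trans l2.
    exists (Z z', Zf z'); first by rewrite inE; apply/asboolP; exists z'.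
    rewrite inE; apply/negP => /asboolP [z2 [[v2 _] [e1 e2] l2]].
    have : z' = z2 by apply: vtx_uniq => //; case: v2.
    by move=> ez; move: l2; rewrite ez ltxx.
  have := proper_card pr; lia.
Qed.

Definition Face (T : {set 'I_m}) (q : 'cV[R]_n) :=
  fun x => S x /\ forall i, i \in T -> phi i x = phi i q.

Definition cvec (T : {set 'I_m}) : 'cV[R]_n := \col_j (\sum_(i in T) Phi i j).

Lemma cvecE (T : {set 'I_m}) x : ((cvec T)^T *m x) 0 0 = \sum_(i in T) phi i x.
Proof.
rewrite mxE; under eq_bigr do rewrite !mxE mulr_suml.
rewrite exchange_big /=; apply: eq_bigr => i _.
by rewrite -PhiE mxE.
Qed.

Lemma face_up (T : {set 'I_m}) q : (forall i, i \in T -> phi i q = phi i ys) -> face S (Face T q).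
Proof.
move=> hq; exists (cvec T), (\sum_(i in T) phi i ys); split.
  move=> x /spE [_ hx]; rewrite cvecE; apply: ler_sum => i _.
  by case/andP: (hx i).
move=> x; split.
  case=> Sx h; split => //; rewrite cvecE; apply: eq_bigr => i iT.
  by rewrite h // hq.
case=> Sx; rewrite cvecE => hs; split => // i iT.
have /spE [_ hx] := Sx.
have h0 : \sum_(i in T) (phi i ys - phi i x) = 0 by rewrite sumrB hs subrr.
have hp : forall j, j \in T -> 0 <= phi j ys - phi j x.
  by move=> j _; rewrite subr_ge0; case/andP: (hx j).
have e := psumr_eq0P hp h0 iT.
by rewrite hq //; apply/eqP; rewrite eq_sym -subr_eq0; apply/eqP.
Qed.

Lemma face_lo (T : {set 'I_m}) q : (forall i, i \in T -> phi i q = 0) -> face S (Face T q).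
Proof.
move=> hq; exists (- cvec T), 0; split.
  move=> x /spE [_ hx]; rewrite linearN mulNmx mxE cvecE oppr_le0.
  by apply: sumr_ge0 => i _; case/andP: (hx i).
move=> x; rewrite linearN mulNmx mxE cvecE; split.
  case=> Sx h; split => //; rewrite big1 ?oppr0 // => i iT.
  by rewrite h // hq.
case=> Sx /eqP; rewrite oppr_eq0 => /eqP hs; split => // i iT.
have /spE [_ hx] := Sx.
have hp : forall j, j \in T -> 0 <= phi j x.
  by move=> j _; case/andP: (hx j).
by rewrite hq //; apply: (psumr_eq0P hp hs iT).
Qed.

Lemma affdim_face (T : {set 'I_m}) q : S q ->
  (forall i, i \notin T -> phi i ys != 0 -> 0 < phi i q < phi i ys) ->
  affdim (Face T q) (dim T).
Proof.
move=> Sq hq; exists q; split; first by split.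
set B := row_base (Sp T).
have BS : forall j, ((row j B)^T^T <= Sp T)%MS.
  by move=> j; rewrite trmxK; apply: submx_trans (row_sub j B) _; rewrite eq_row_base.
have /spE [qW qb] := Sq.
have [e e0 He] : exists2 t, 0 < t & forall p : ('I_m * 'I_(dim T))%type,
    0 <= phi p.1 (q + t *: (row p.2 B)^T) <= phi p.1 ys.
  apply: (@small_t R _ (fun p t => 0 <= phi p.1 (q + t *: (row p.2 B)^T) <= phi p.1 ys)).
  case=> i j /=.
  have /SpP [bW bz] := BS j.
  case: (boolP (i \in T)) => iT.
    by exists 1 => // t _ _; rewrite phiD phiZ bz // mulr0 addr0.
  case: (eqVneq (phi i ys) 0) => hy.
    by exists 1 => // t _ _; rewrite !(phi_ys0 _ hy) lexx.
  case/andP: (hq i iT hy) => h1 h2.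
  have [e e0 He] := @strict_perturb R (phi i q) 0 (phi i ys) (phi i (row j B)^T) h1 h2.
  by exists e => // t t0 te; rewrite phiD phiZ; apply: He.
have e0' : e != 0 by rewrite lt0r_neq0.
exists (e *: B); split; [|split].
- move=> j; have /SpP [bW bz] := BS j.
  rewrite linearZ /= [(e *: _)^T]linearZ /=; split.
    apply/spE; split; first by rewrite trD trZ addmx_sub // scalemx_sub.
    by move=> i; have := He (i, j).
  by move=> i iT; rewrite phiD phiZ bz // mulr0 addr0.
- by rewrite /row_free (eqmx_scale _ e0') -/(row_free B) row_base_free.
- move=> x [Sx hx]; rewrite (eqmx_scale _ e0') eq_row_base; apply/SpP; split.
    by rewrite trD trN addmx_sub ?subN //; apply: hSV.
  by move=> i iT; rewrite phiB hx // subrr.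
Qed.

Lemma final d : (1 <= d <= k)%N ->
  exists F G : 'cV[R]_n -> Prop,
    [/\ face S F, affdim F d & F ys] /\
    [/\ face S G, affdim G (k - d) & G 0] /\
    (exists z, F z /\ G z).
Proof.
case/andP => d1 dk.
have [z [Sz hf hz]] := main_comb dk.
have [p1 [Sp1 s1 e1]] := gradef Sz hf dk.
have [p2 [Sp2 s2 e2]] := grade0 Sz hz (leq_subr d k).
pose q1 := 2^-1 *: (p1 + ys); pose q2 := 2^-1 *: p2.
have phq1 i : phi i q1 = (phi i p1 + phi i ys) / 2 by rewrite phiZ phiD mulrC.
have phq2 i : phi i q2 = phi i p2 / 2 by rewrite phiZ mulrC.
have hq1 i : i \in Zf p1 -> phi i q1 = phi i ys.
  by rewrite inZf phq1 => /eqP ->; field.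
have hq2 i : i \in Z p2 -> phi i q2 = 0.
  by rewrite inZ phq2 => /eqP ->; rewrite mul0r.
have /spE [p1W p1b] := Sp1; have /spE [p2W p2b] := Sp2.
have Sq1 : S q1.
  apply/spE; split; first by rewrite trZ scalemx_sub // trD addmx_sub // inW_ys.
  move=> i; rewrite phq1; case/andP: (p1b i) => a b; apply/andP; split; lra.
have Sq2 : S q2.
  apply/spE; split; first by rewrite trZ scalemx_sub.
  move=> i; rewrite phq2; have := phiys_ge0 i; case/andP: (p2b i) => a b h; apply/andP; split; lra.
exists (Face (Zf p1) q1), (Face (Z p2) q2); split; [|split].
- split; first exact: face_up.
    rewrite -e1; apply: affdim_face => // i iT hy.
    have hy0 := phiys_gt0 hy; rewrite phq1; case/andP: (p1b i) => a b.
    have : phi i p1 != phi i ys by rewrite -inZf.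
    move=> ne; have lt : phi i p1 < phi i ys by rewrite lt_neqAle ne b.
    apply/andP; split; lra.
  by split; [exact: S_ys | move=> i iT; rewrite hq1].
- split; first exact: face_lo.
    rewrite -e2; apply: affdim_face => // i iT hy.
    have hy0 := phiys_gt0 hy; rewrite phq2; case/andP: (p2b i) => a b.
    have : phi i p2 != 0 by rewrite -inZ.
    move=> ne; have lt : 0 < phi i p2 by rewrite lt_def ne a.
    apply/andP; split; lra.
  by split; [exact: S0 | move=> i iT; rewrite hq2 // phi0].
- exists z; split; split => // i iT.
    by rewrite hq1 //; apply/eqP; rewrite -inZf; apply: (subsetP s1).
  by rewrite hq2 //; apply/eqP; rewrite -inZ; apply: (subsetP s2).
Qed.

End Main.

Unset Implicit Arguments.

Lemma spindle0 (R : realType) m n (A : 'M[int]_(m, n)) (ys : 'cV[R]_n) :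
  spindle A ys 0.
Proof.
split => i; rewrite ?subr0; case: ifP => h.
- by rewrite arow0 mulr0.
- by rewrite arow0.
- by rewrite -normrEsg normr_ge0.
- by move/negbFE: h.
Qed.

Theorem lemma6 (R : realType) (m n : nat) (A : 'M[int]_(m, n))
  (xs ys : 'cV[R]_n) (k d : nat) :
  \rank (intmxR R A) = n ->
  spindle A xs ys ->
  affdim (spindle A ys) k ->
  (1 <= d <= k)%N ->
  exists F G : 'cV[R]_n -> Prop,
    [/\ face (spindle A ys) F, affdim F d & F ys] /\
    [/\ face (spindle A ys) G, affdim G (k - d) & G 0] /\
    (exists z, F z /\ G z).
Proof.
move=> hrk _ [x0 [Sx0 [V [hrows [hfree hspan]]]]] hd.
have hVk : \rank V = k by apply/eqP.
have hSV : forall x, spindle A ys x -> (x^T <= V)%MS.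
  move=> x Sx; have h1 := hspan x Sx; have h2 := hspan 0 (@spindle0 R m n A ys).
  have -> : x^T = (x - x0)^T - (0 - x0)^T.
    by rewrite !linearB /= trmx0 oppr0 sub0r opprK subrK.
  by apply: addmx_sub => //; rewrite subN.
have hVL : forall i r, arow A i ys = 0 -> (r <= V)%MS -> arow A i r^T = 0.
  move=> i r e hr.
  have hS : forall x, spindle A ys x -> arow A i x = 0.
    by move=> x [/(_ i)]; rewrite e eqxx /= => /eqP.
  have hrow : forall j, arow A i (row j V)^T = 0.
    move=> j; have := hS _ (hrows j); rewrite arowD hS // add0r //.
  case/submxP: hr => D ->.
  rewrite /arow trmx_mul mulmxA mxE big1 // => l _.
  have -> : (intmxR R A *m V^T) i l = arow A i (row l V)^T.
    by rewrite /arow !mxE; apply: eq_bigr => j _; rewrite !mxE.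
  by rewrite hrow mul0r.
exact: final hrk hVk hSV hVL d hd.
Qed.
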